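(* Let $\mathbf{k}$ be an algebraically closed field of characteristic zero and let $\mathbb{H}_4$ be Sweedler's 4-dimensional Hopf algebra, with basis $\{1,g,\nu,g\nu\}$. Then every relaxed weak post-Hopf algebra structure $\rhd$ on $\mathbb{H}_4$ has one of the following forms (in each case $x\rhd 1=\varepsilon(x)1$, i.e. $1\rhd 1=g\rhd 1=1$ and $\nu\rhd 1=g\nu\rhd 1=0$; the remaining values are listed): (i) for some parameter $a\in\mathbf{k}$: $1\rhd g=g$, $1\rhd\nu=\nu$, $1\rhd g\nu=g\nu$; $g\rhd g=g$, $g\rhd\nu=-\nu$, $g\rhd g\nu=-g\nu$; $\nu\rhd g=0$, $\nu\rhd\nu=a\nu$, $\nu\rhd g\nu=ag\nu$; $g\nu\rhd g=0$, $g\nu\rhd\nu=a\nu$, $g\nu\rhd g\nu=ag\nu$. (ii) for some parameter $a\in\mathbf{k}$: $1\rhd g=g$, $1\rhd\nu=\nu$, $1\rhd g\nu=g\nu$; $g\rhd g=1$, $g\rhd\nu=0$, $g\rhd g\nu=0$; $\nu\rhd g=a1-ag$, $\nu\rhd\nu=-a\nu$, $\nu\rhd g\nu=-ag\nu$; $g\nu\rhd g=a1-ag$, $g\nu\rhd\nu=-a\nu$, $g\nu\rhd g\nu=-ag\nu$. (iii) $1\rhd g=g$, $1\rhd\nu=\nu$, $1\rhd g\nu=g\nu$; $g\rhd g=g$, $g\rhd\nu=\nu$, $g\rhd g\nu=g\nu$; and $\nu\rhd y=g\nu\rhd y=0$ for $y\in\{g,\nu,g\nu\}$. (iv) $1\rhd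 g=g$, $g\rhd g=g$, and $x\rhd y=0$ for all $x\in\{1,g,\nu,g\nu\}$, $y\in\{\nu,g\nu\}$, and $\nu\rhd g=g\nu\rhd g=0$. (v) $1\rhd g=g$, $g\rhd g=1$, and $x\rhd y=0$ for all $x\in\{1,g,\nu,g\nu\}$, $y\in\{\nu,g\nu\}$, and $\nu\rhd g=g\nu\rhd g=0$. (vi) $1\rhd g=1$, $g\rhd g=1$, and $x\rhd y=0$ for all $x\in\{1,g,\nu,g\nu\}$, $y\in\{\nu,g\nu\}$, and $\nu\rhd g=g\nu\rhd g=0$.
   Context: Sweedler's 4-dimensional Hopf algebra $\mathbb{H}_4$ is the algebra generated by $g,\nu$ with relations $g^2=1$, $\nu^2=0$, $g\nu+\nu g=0$, with coproduct $\Delta(g)=g\otimes g$, $\Delta(\nu)=g\otimes\nu+\nu\otimes 1$, counit $\varepsilon(g)=1$, $\varepsilon(\nu)=0$, antipode $S(g)=g$, $S(\nu)=-g\nu$. Sweedler notation $\Delta(x)=x_1\otimes x_2$ is used with summation suppressed. A relaxed weak post-Hopf algebra structure on a Hopf algebra $H$ is a linear map $\rhd:H\otimes H\to H$ which is a coalgebra homomorphism, where $H\otimes H$ carries the tensor product coalgebra structure (i.e. $\Delta(x\rhd y)=(x_1\rhd y_1)\otimes(x_2\rhd y_2)$ and $\varepsilon(x\rhd y)=\varepsilon(x)\varepsilon(y)$), satisfying for all $x,y,z\in H$: (1) $x\rhd(yz)=(x_1\rhd y)(x_2\rhd z)$; (2) $x\rhd(y\rhd z)=\big(x_1(x_2\rhd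 y)\big)\rhd z$. (No condition $1\rhd x=x$ is imposed.) The map $\rhd$ is determined by its values $x\rhd y$ on basis elements $x,y\in\{1,g,\nu,g\nu\}$, extended bilinearly. *)

(* Defs.v *)
(* Sweedler's Hopf algebra H4 over a field F, realized as
   row vectors 'rV[F]_4 in the basis e_0 = 1, e_1 = g, e_2 = nu, e_3 = g nu.
   H4 (x) H4 is realized as 4x4 matrices: T a b = coefficient of e_a (x) e_b. *)
From HB Require Import structures.
From mathcomp Require Import all_boot all_order all_algebra.
Set Implicit Arguments. Unset Strict Implicit. Unset Printing Implicit Defensive.
Import Order.TTheory GRing.Theory Num.Theory.
Local Open Scope ring_scope.

Section H4.
Variable F : fieldType.

Definition i1 : 'I_4 := @Ordinal 4 0 isT.
Definition ig : 'I_4 := @Ordinal 4 1 isT.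
Definition inu : 'I_4 := @Ordinal 4 2 isT.
Definition ignu : 'I_4 := @Ordinal 4 3 isT.

Definition e (i : 'I_4) : 'rV[F]_4 := delta_mx 0 i.
Definition one := e i1.
Definition gg := e ig.
Definition nu := e inu.
Definition gnu := e ignu.

(* products of basis elements: g^2 = 1, nu^2 = 0, g nu = - nu g *)
Definition mulb (i j : 'I_4) : 'rV[F]_4 :=
  match nat_of_ord i, nat_of_ord j with
  | 0, _ => e j
  | _, 0 => e i
  | 1, 1 => one
  | 1, 2 => gnu
  | 1, 3 => nu
  | 2, 1 => - gnu
  | 3, 1 => - nu
  | _, _ => 0
  end.

Definition mul (x y : 'rV[F]_4) : 'rV[F]_4 :=
  \sum_i \sum_j (x 0 i * y 0 j) *: mulb i j.

Definition tens (u v : 'rV[F]_4) : 'M[F]_4 := u^T *m v.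

Definition copb (i : 'I_4) : 'M[F]_4 :=
  match nat_of_ord i with
  | 0 => tens one one
  | 1 => tens gg gg
  | 2 => tens gg nu + tens nu one
  | _ => tens one gnu + tens gnu gg
  end.

Definition cop (x : 'rV[F]_4) : 'M[F]_4 := \sum_i x 0 i *: copb i.

Definition eps (x : 'rV[F]_4) : F := x 0 i1 + x 0 ig.

(* Sweedler sum: for T = sum x1 (x) x2, swe T f = sum f x1 x2
   (f is bilinear in the Sweedler components) *)
Definition swe (V : lmodType F) (T : 'M[F]_4) (f : 'rV[F]_4 -> 'rV[F]_4 -> V) : V :=
  \sum_a \sum_b T a b *: f (e a) (e b).

(* A bilinear map H4 (x) H4 -> H4 given by its values R i j = e_i |> e_j *)
Definition rhd (R : 'I_4 -> 'I_4 -> 'rV[F]_4) (x y : 'rV[F]_4) : 'rV[F]_4 :=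
  \sum_i \sum_j (x 0 i * y 0 j) *: R i j.

Definition is_rwpH (R : 'I_4 -> 'I_4 -> 'rV[F]_4) : Prop :=
  (forall x y, cop (rhd R x y) =
     swe (cop x) (fun x1 x2 => swe (cop y) (fun y1 y2 =>
        tens (rhd R x1 y1) (rhd R x2 y2)))) /\
  (forall x y, eps (rhd R x y) = eps x * eps y) /\
  (* (1) *)
  (forall x y z, rhd R x (mul y z) =
     swe (cop x) (fun x1 x2 => mul (rhd R x1 y) (rhd R x2 z))) /\
  (* (2) *)
  (forall x y z, rhd R x (rhd R y z) =
     rhd R (swe (cop x) (fun x1 x2 => mul x1 (rhd R x2 y))) z).

Definition unit_vals R : Prop :=
  R i1 i1 = one /\ R ig i1 = one /\ R inu i1 = 0 /\ R ignu i1 = 0.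

Definition case_i R (a : F) : Prop :=
  unit_vals R /\
  R i1 ig = gg /\ R i1 inu = nu /\ R i1 ignu = gnu /\
  R ig ig = gg /\ R ig inu = - nu /\ R ig ignu = - gnu /\
  R inu ig = 0 /\ R inu inu = a *: nu /\ R inu ignu = a *: gnu /\
  R ignu ig = 0 /\ R ignu inu = a *: nu /\ R ignu ignu = a *: gnu.

Definition case_ii R (a : F) : Prop :=
  unit_vals R /\
  R i1 ig = gg /\ R i1 inu = nu /\ R i1 ignu = gnu /\
  R ig ig = one /\ R ig inu = 0 /\ R ig ignu = 0 /\
  R inu ig = a *: one - a *: gg /\ R inu inu = - (a *: nu) /\
  R inu ignu = - (a *: gnu) /\
  R ignu ig = a *: one - a *: gg /\ R ignu inu = - (a *: nu) /\
  R ignu ignu = - (a *: gnu).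

Definition case_iii R : Prop :=
  unit_vals R /\
  R i1 ig = gg /\ R i1 inu = nu /\ R i1 ignu = gnu /\
  R ig ig = gg /\ R ig inu = nu /\ R ig ignu = gnu /\
  R inu ig = 0 /\ R inu inu = 0 /\ R inu ignu = 0 /\
  R ignu ig = 0 /\ R ignu inu = 0 /\ R ignu ignu = 0.

Definition case_ivvi R (v1g vgg : 'rV[F]_4) : Prop :=
  unit_vals R /\
  R i1 ig = v1g /\ R ig ig = vgg /\
  (forall x, R x inu = 0 /\ R x ignu = 0) /\
  R inu ig = 0 /\ R ignu ig = 0.

Definition case_iv R := case_ivvi R gg gg.
Definition case_v R := case_ivvi R gg one.
Definition case_vi R := case_ivvi R one one.

End H4.

(* Main.v *)
From HB Require Import structures.
From mathcomp Require Import all_boot all_order all_algebra ring.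
Require Import Defs.
Set Implicit Arguments. Unset Strict Implicit. Unset Printing Implicit Defensive.
Import Order.TTheory GRing.Theory Num.Theory.
Local Open Scope ring_scope.

Section Aux.
Variable F : fieldType.

Lemma sum4 (V : nmodType) (f : 'I_4 -> V) :
  \sum_(l < 4) f l = f i1 + f ig + f inu + f ignu.
Proof.
rewrite !big_ord_recl big_ord0 addr0 !addrA.
by congr (_ + _ + _ + _); congr f; apply: val_inj.
Qed.

Lemma ord4 (i : 'I_4) : i = i1 \/ i = ig \/ i = inu \/ i = ignu.
Proof.
case: i => [[|[|[|[|n]]]] Hi].
- by left; apply: val_inj.
- by right; left; apply: val_inj.
- by right; right; left; apply: val_inj.
- by right; right; right; apply: val_inj.
- by [].
Qed.

Ltac o4 i := case: (ord4 i) => [->|[->|[->|->]]].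

Lemma mul0 (x y : 'rV[F]_4) : (mul x y) 0 i1 = x 0 i1 * y 0 i1 + x 0 ig * y 0 ig.
Proof. rewrite /mul !sum4 /mulb /= /Defs.one /gg /nu /gnu !mxE /=; ring. Qed.
Lemma mul1 (x y : 'rV[F]_4) : (mul x y) 0 ig = x 0 i1 * y 0 ig + x 0 ig * y 0 i1.
Proof. rewrite /mul !sum4 /mulb /= /Defs.one /gg /nu /gnu !mxE /=; ring. Qed.
Lemma mul2 (x y : 'rV[F]_4) : (mul x y) 0 inu =
  x 0 i1 * y 0 inu + x 0 inu * y 0 i1 + x 0 ig * y 0 ignu - x 0 ignu * y 0 ig.
Proof. rewrite /mul !sum4 /mulb /= /Defs.one /gg /nu /gnu !mxE /=; ring. Qed.
Lemma mul3 (x y : 'rV[F]_4) : (mul x y) 0 ignu =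
  x 0 i1 * y 0 ignu + x 0 ignu * y 0 i1 + x 0 ig * y 0 inu - x 0 inu * y 0 ig.
Proof. rewrite /mul !sum4 /mulb /= /Defs.one /gg /nu /gnu !mxE /=; ring. Qed.

Lemma tensE (u v : 'rV[F]_4) a b : tens u v a b = u 0 a * v 0 b.
Proof. by rewrite /tens mxE big_ord1 mxE. Qed.

Lemma mul_ee (i j : 'I_4) : mul (e F i) (e F j) = mulb F i j.
Proof.
rewrite /mul !sum4 !mxE /=.
o4 i; o4 j; rewrite /= !(mul0r,mulr0,mul1r,scale0r,scale1r,add0r,addr0) //.
Qed.

Lemma cop_e (i : 'I_4) : cop (e F i) = copb F i.
Proof.
rewrite /cop !sum4 !mxE /=.
o4 i; rewrite /= !(mul0r,mulr0,mul1r,scale0r,scale1r,add0r,addr0) //.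
Qed.

Lemma rhd_ee R (i j : 'I_4) : rhd R (e F i) (e F j) = R i j.
Proof.
rewrite /rhd !sum4 !mxE /=.
o4 i; o4 j; rewrite /= !(mul0r,mulr0,mul1r,scale0r,scale1r,add0r,addr0) //.
Qed.

Lemma rhd_N R x y : rhd R x (- y) = - rhd (F:=F) R x y.
Proof.
rewrite /rhd -sumrN; apply: eq_bigr => i _; rewrite -sumrN; apply: eq_bigr => j _.
by rewrite mxE mulrN scaleNr.
Qed.

Lemma rhd_0 R x : rhd R x 0 = 0 :> 'rV[F]_4.
Proof.
rewrite /rhd big1 // => i _; rewrite big1 // => j _; by rewrite mxE mulr0 scale0r.
Qed.

Lemma swe_add (V : lmodType F) T1 T2 (f : 'rV[F]_4 -> 'rV[F]_4 -> V) :
  swe (T1 + T2) f = swe T1 f + swe T2 f.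
Proof.
rewrite /swe -big_split; apply: eq_bigr => a _; rewrite -big_split;
apply: eq_bigr => b _; by rewrite mxE scalerDl.
Qed.

Lemma swe_tens (V : lmodType F) a b (f : 'rV[F]_4 -> 'rV[F]_4 -> V) :
  swe (tens (e F a) (e F b)) f = f (e F a) (e F b).
Proof.
rewrite /swe !sum4 !tensE !mxE /=.
o4 a; o4 b; rewrite /= !(mul0r,mulr0,mul1r,scale0r,scale1r,add0r,addr0) //.
Qed.

Lemma copE (v : 'rV[F]_4) a b : cop v a b =
  v 0 i1 * copb F i1 a b + v 0 ig * copb F ig a b + v 0 inu * copb F inu a b
  + v 0 ignu * copb F ignu a b.
Proof. by rewrite /cop summxE sum4 !mxE. Qed.

Lemma rhdE R (x y : 'rV[F]_4) c : (rhd R x y) 0 c =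
  \sum_(i < 4) \sum_(j < 4) x 0 i * y 0 j * R i j 0 c.
Proof. rewrite /rhd summxE; apply: eq_bigr => i _; rewrite summxE;
  apply: eq_bigr => j _; by rewrite mxE. Qed.

End Aux.
Section Aux2.
Variable F : fieldType.
Lemma addE m n (A B : 'M[F]_(m,n)) i j : (A + B) i j = A i j + B i j.
Proof. by rewrite mxE. Qed.
Lemma oppE m n (A : 'M[F]_(m,n)) i j : (- A) i j = - A i j.
Proof. by rewrite mxE. Qed.
Lemma scaleE m n c (A : 'M[F]_(m,n)) i j : (c *: A) i j = c * A i j.
Proof. by rewrite mxE. Qed.
Lemma zeroE m n i j : (0 : 'M[F]_(m,n)) i j = 0.
Proof. by rewrite mxE. Qed.
End Aux2.
Section Aux3.
Variable F : fieldType.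
Lemma lcL (c X Y P Q : F) : X = Y -> P - Q = c * (X - Y) -> P = Q.
Proof. by move=> -> h; apply/eqP; rewrite -subr_eq0 h subrr mulr0. Qed.
Lemma lc1 (c X Y : F) : X = Y -> 1 - 0 = c * (X - Y) -> False.
Proof. move=> h1 h2; have := lcL h1 h2; by move/eqP; rewrite oner_eq0. Qed.
Lemma sq0 (a : F) : a * a = 0 -> a = 0.
Proof. by move/eqP; rewrite mulf_eq0 orbb => /eqP. Qed.
Lemma glike (v0 v1 : F) : v0 = v0 * v0 -> v0 * v1 = 0 -> v0 + v1 = 1 ->
  (v0 = 1 /\ v1 = 0) \/ (v0 = 0 /\ v1 = 1).
Proof.
move=> h0 h01 he.
have : v0 * (v0 - 1) = 0 by rewrite mulrBr mulr1 -h0 subrr.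
move/eqP; rewrite mulf_eq0 subr_eq0 => /orP [/eqP z|/eqP o].
- by right; split=> //; rewrite -he z add0r.
- by left; split=> //; move: h01; rewrite o mul1r.
Qed.
Lemma row4 (v w : 'rV[F]_4) : v 0 i1 = w 0 i1 -> v 0 ig = w 0 ig ->
  v 0 inu = w 0 inu -> v 0 ignu = w 0 ignu -> v = w.
Proof.
move=> a b c d; apply/rowP => k.
by case: (ord4 k) => [->|[->|[->|->]]].
Qed.
End Aux3.
Section Aux4.
Variable F : fieldType.
Lemma idem (x : F) : x * x = x -> x = 0 \/ x = 1.
Proof.
move=> h; have : x * (x - 1) = 0 by rewrite mulrBr mulr1 h subrr.
by move/eqP; rewrite mulf_eq0 subr_eq0 => /orP [/eqP|/eqP]; [left|right].
Qed.
Lemma sq1 (x : F) : x * x = 1 -> x = 1 \/ x = -1.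
Proof.
move=> h; have : (x - 1) * (x + 1) = 0.
  by rewrite mulrDr mulr1 !mulrBl h mul1r addrA subrK subrr.
by move/eqP; rewrite mulf_eq0 subr_eq0 addr_eq0 => /orP [/eqP|/eqP]; [left|right].
Qed.
Lemma two0 (x : F) : (2:F) != 0 -> 2 * x = 0 -> x = 0.
Proof. by move=> t /eqP; rewrite mulf_eq0 (negbTE t) => /eqP. Qed.
End Aux4.
Section Aux5.
Variable F : fieldType.
Lemma rhd_xe R (x : 'rV[F]_4) k c : (rhd R x (e F k)) 0 c =
  x 0 i1 * R i1 k 0 c + x 0 ig * R ig k 0 c + x 0 inu * R inu k 0 c + x 0 ignu * R ignu k 0 c.
Proof.
rewrite rhdE sum4; congr (_ + _ + _ + _); rewrite sum4 !mxE;
case: (ord4 k) => [->|[->|[->|->]]]; rewrite /= ?(mulr0,mul0r,addr0,add0r,mulr1) //.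
Qed.
Lemma rhd_ex R (y : 'rV[F]_4) i c : (rhd R (e F i) y) 0 c =
  y 0 i1 * R i i1 0 c + y 0 ig * R i ig 0 c + y 0 inu * R i inu 0 c + y 0 ignu * R i ignu 0 c.
Proof.
rewrite rhdE !sum4 !mxE;
case: (ord4 i) => [->|[->|[->|->]]]; rewrite /= ?(mulr0,mul0r,addr0,add0r,mul1r) //.
Qed.
End Aux5.
Lemma mk_ivvi (F : fieldType) (R : 'I_4 -> 'I_4 -> 'rV[F]_4) v1g vgg :
  unit_vals R -> R i1 ig = v1g -> R ig ig = vgg ->
  (R i1 inu = 0 /\ R i1 ignu = 0) -> (R ig inu = 0 /\ R ig ignu = 0) ->
  (R inu inu = 0 /\ R inu ignu = 0) -> (R ignu inu = 0 /\ R ignu ignu = 0) ->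
  R inu ig = 0 -> R ignu ig = 0 -> case_ivvi R v1g vgg.
Proof.
move=> U a b c d f g h k; split=> //; split=> //; split=> //; split=> //.
by move=> x; case: (ord4 x) => [->|[->|[->|->]]].
Qed.

Ltac unf := rewrite /copb /mulb /= /Defs.one /gg /nu /gnu.
Ltac sw := rewrite ?swe_add ?swe_tens /= ?swe_add ?swe_tens /= ?rhd_ee ?rhd_N ?rhd_0.
Ltac ent := rewrite ?copE ?rhd_xe ?rhd_ex ?rhdE ?sum4; unf; rewrite ?addE ?oppE ?scaleE ?zeroE ?tensE ?mul0 ?mul1 ?mul2 ?mul3 ?mxE /=.
Ltac gC C i j a b := have := entM a b (C i j); unf; sw; ent.
Ltac gP1 P1 i j k c := have := entV c (P1 i j k); unf; sw; ent.
Ltac gP2 P2 i j k c := have := entV c (P2 i j k); unf; sw; ent.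
Ltac gE hE i j := have := hE (e _ i) (e _ j); rewrite rhd_ee /eps !mxE /=.
Ltac subs R := repeat match goal with H : @fun_of_matrix _ _ _ (R _ _) _ _ = _ |- _ => progress rewrite H end.
Ltac fin R := subs R; let h := fresh in move=> h;
  first [ apply: (lcL (c:=1) h); ring | apply: (lcL (c:=-1) h); ring
        | apply: (lcL (c:=2) h); ring | apply: (lcL (c:=-2) h); ring ].
Ltac bad R := subs R; let h := fresh in move=> h; exfalso;
  first [ apply: (lc1 (c:=1) h); ring | apply: (lc1 (c:=-1) h); ring ].

Ltac vec R := apply: row4; rewrite /Defs.one /gg /nu /gnu ?addE ?oppE ?scaleE ?zeroE ?mxE /=; subs R; ring.

Ltac GL R C hE i j :=
  split; [apply: sq0; gC C i j inu inu; fin R | split; [apply: sq0; gC C i j ignu ignu; fin R |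
    apply: glike; [gC C i j i1 i1; fin R | gC C i j i1 ig; fin R | gE hE i j; fin R]]].

Lemma entM (F : fieldType) a b (M N : 'M[F]_4) : M = N -> M a b = N a b.
Proof. by move->. Qed.
Lemma entV (F : fieldType) a (M N : 'rV[F]_4) : M = N -> M 0 a = N 0 a.
Proof. by move->. Qed.

Theorem theorem1 (F : closedFieldType) (hF : [pchar F] =i pred0)
    (R : 'I_4 -> 'I_4 -> 'rV[F]_4) :
  is_rwpH R ->
  (exists a : F, case_i R a) \/ (exists a : F, case_ii R a) \/
  case_iii R \/ case_iv R \/ case_v R \/ case_vi R.
Proof.
move=> [hC [hE [h1 h2]]].
have two : (2:F) != 0.
  by move: (hF 2); rewrite !inE /= => /negbT.
have C i j : cop (R i j) = swe (copb F i) (fun x1 x2 => swe (copb F j)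
   (fun y1 y2 => tens (rhd R x1 y1) (rhd R x2 y2))).
  by rewrite -(rhd_ee R i j) hC !cop_e.
have P1 i j k : rhd R (e F i) (mulb F j k) =
   swe (copb F i) (fun x1 x2 => mul (rhd R x1 (e F j)) (rhd R x2 (e F k))).
  by rewrite -mul_ee h1 cop_e.
have P2 i j k : rhd R (e F i) (R j k) =
   rhd R (swe (copb F i) (fun x1 x2 => mul x1 (rhd R x2 (e F j)))) (e F k).
  by rewrite -(rhd_ee R j k) h2 cop_e.
clear hC h1 h2.
(* grouplikes *)
have [u002 [u003 u00]] : R i1 i1 0 inu = 0 /\ R i1 i1 0 ignu = 0 /\
  ((R i1 i1 0 i1 = 1 /\ R i1 i1 0 ig = 0) \/ (R i1 i1 0 i1 = 0 /\ R i1 i1 0 ig = 1)).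
  GL R C hE i1 i1.
have [u102 [u103 u10]] : R ig i1 0 inu = 0 /\ R ig i1 0 ignu = 0 /\
  ((R ig i1 0 i1 = 1 /\ R ig i1 0 ig = 0) \/ (R ig i1 0 i1 = 0 /\ R ig i1 0 ig = 1)).
  GL R C hE ig i1.
have [u012 [u013 u01]] : R i1 ig 0 inu = 0 /\ R i1 ig 0 ignu = 0 /\
  ((R i1 ig 0 i1 = 1 /\ R i1 ig 0 ig = 0) \/ (R i1 ig 0 i1 = 0 /\ R i1 ig 0 ig = 1)).
  GL R C hE i1 ig.
have [u112 [u113 u11]] : R ig ig 0 inu = 0 /\ R ig ig 0 ignu = 0 /\
  ((R ig ig 0 i1 = 1 /\ R ig ig 0 ig = 0) \/ (R ig ig 0 i1 = 0 /\ R ig ig 0 ig = 1)).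
  GL R C hE ig ig.
case: u00 => [[u000 u001]|[u000 u001]]; last by gP1 P1 i1 i1 i1 ig; bad R.
case: u10 => [[u100 u101]|[u100 u101]]; last by gP1 P1 ig i1 i1 ig; bad R.
have r200 : R inu i1 0 i1 = 0 by gP1 P1 inu i1 i1 i1; fin R.
have r201 : R inu i1 0 ig = 0 by gP1 P1 inu i1 i1 ig; fin R.
have r202 : R inu i1 0 inu = 0 by gP1 P1 inu i1 i1 inu; fin R.
have r203 : R inu i1 0 ignu = 0 by gP1 P1 inu i1 i1 ignu; fin R.
have r300 : R ignu i1 0 i1 = 0 by gP1 P1 ignu i1 i1 i1; fin R.
have r301 : R ignu i1 0 ig = 0 by gP1 P1 ignu i1 i1 ig; fin R.
have r302 : R ignu i1 0 inu = 0 by gP1 P1 ignu i1 i1 inu; fin R.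
have r303 : R ignu i1 0 ignu = 0 by gP1 P1 ignu i1 i1 ignu; fin R.
have UV : unit_vals R.
  by split; [|split; [|split]]; vec R.
case: u01 => [[u010 u011]|[u010 u011]]; case: u11 => [[u110 u111]|[u110 u111]].
- (* A = 1, B = 1 : case vi *)
  have r021 : R i1 inu 0 ig = 0 by gC C i1 inu ig ig; fin R.
  have r022 : R i1 inu 0 inu = 0 by gC C i1 inu ig inu; fin R.
  have r023 : R i1 inu 0 ignu = 0 by gC C i1 inu ignu ig; fin R.
  have r020 : R i1 inu 0 i1 = 0 by gC C i1 inu i1 i1; fin R.
  have r121 : R ig inu 0 ig = 0 by gC C ig inu ig ig; fin R.
  have r122 : R ig inu 0 inu = 0 by gC C ig inu ig inu; fin R.
  have r123 : R ig inu 0 ignu = 0 by gC C ig inu ignu ig; fin R.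
  have r120 : R ig inu 0 i1 = 0 by gC C ig inu i1 i1; fin R.
  have r211 : R inu ig 0 ig = 0 by gC C inu ig ig ig; fin R.
  have r212 : R inu ig 0 inu = 0 by gC C inu ig ig inu; fin R.
  have r213 : R inu ig 0 ignu = 0 by gC C inu ig ignu ig; fin R.
  have r210 : R inu ig 0 i1 = 0 by gC C inu ig i1 i1; fin R.
  have r311 : R ignu ig 0 ig = 0 by gC C ignu ig ig ig; fin R.
  have r312 : R ignu ig 0 inu = 0 by gC C ignu ig ig inu; fin R.
  have r313 : R ignu ig 0 ignu = 0 by gC C ignu ig ignu ig; fin R.
  have r310 : R ignu ig 0 i1 = 0 by gC C ignu ig i1 i1; fin R.
  have r030 : R i1 ignu 0 i1 = 0 by gP1 P1 i1 ig inu i1; fin R.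
  have r031 : R i1 ignu 0 ig = 0 by gP1 P1 i1 ig inu ig; fin R.
  have r032 : R i1 ignu 0 inu = 0 by gP1 P1 i1 ig inu inu; fin R.
  have r033 : R i1 ignu 0 ignu = 0 by gP1 P1 i1 ig inu ignu; fin R.
  have r130 : R ig ignu 0 i1 = 0 by gP1 P1 ig ig inu i1; fin R.
  have r131 : R ig ignu 0 ig = 0 by gP1 P1 ig ig inu ig; fin R.
  have r132 : R ig ignu 0 inu = 0 by gP1 P1 ig ig inu inu; fin R.
  have r133 : R ig ignu 0 ignu = 0 by gP1 P1 ig ig inu ignu; fin R.
  have r220 : R inu inu 0 i1 = 0 by gP2 P2 inu i1 inu i1; fin R.
  have r221 : R inu inu 0 ig = 0 by gP2 P2 inu i1 inu ig; fin R.
  have r222 : R inu inu 0 inu = 0 by gP2 P2 inu i1 inu inu; fin R.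
  have r223 : R inu inu 0 ignu = 0 by gP2 P2 inu i1 inu ignu; fin R.
  have r230 : R inu ignu 0 i1 = 0 by gP2 P2 inu i1 ignu i1; fin R.
  have r231 : R inu ignu 0 ig = 0 by gP2 P2 inu i1 ignu ig; fin R.
  have r232 : R inu ignu 0 inu = 0 by gP2 P2 inu i1 ignu inu; fin R.
  have r233 : R inu ignu 0 ignu = 0 by gP2 P2 inu i1 ignu ignu; fin R.
  have r320 : R ignu inu 0 i1 = 0 by gP2 P2 ignu i1 inu i1; fin R.
  have r321 : R ignu inu 0 ig = 0 by gP2 P2 ignu i1 inu ig; fin R.
  have r322 : R ignu inu 0 inu = 0 by gP2 P2 ignu i1 inu inu; fin R.
  have r323 : R ignu inu 0 ignu = 0 by gP2 P2 ignu i1 inu ignu; fin R.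
  have r330 : R ignu ignu 0 i1 = 0 by gP2 P2 ignu i1 ignu i1; fin R.
  have r331 : R ignu ignu 0 ig = 0 by gP2 P2 ignu i1 ignu ig; fin R.
  have r332 : R ignu ignu 0 inu = 0 by gP2 P2 ignu i1 ignu inu; fin R.
  have r333 : R ignu ignu 0 ignu = 0 by gP2 P2 ignu i1 ignu ignu; fin R.
  right; right; right; right; right.
  split=> //; split; [vec R|split; [vec R|split; [|split; vec R]]].
  by move=> x; case: (ord4 x) => [->|[->|[->|->]]]; split; vec R.
- (* A = 1, B = g : impossible *)
  by gP2 P2 ig ig ig ig; bad R.
- (* A = g, B = 1 : cases ii, v *)
  have r023 : R i1 inu 0 ignu = 0 by gC C i1 inu i1 ignu; fin R.
  have r021 : R i1 inu 0 ig = - R i1 inu 0 i1 by gC C i1 inu ig i1; fin R.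
  have r020' : 2 * (R i1 inu 0 i1 * R i1 inu 0 i1) = 0 by gP1 P1 i1 inu inu i1; fin R.
  have r020 : R i1 inu 0 i1 = 0 by apply: sq0; apply: two0 two r020'.
  have r030 : R i1 ignu 0 i1 = 0 by gP1 P1 i1 ig inu i1; fin R.
  have r031 : R i1 ignu 0 ig = 0 by gP1 P1 i1 ig inu ig; fin R.
  have r032 : R i1 ignu 0 inu = 0 by gP1 P1 i1 ig inu inu; fin R.
  have r033 : R i1 ignu 0 ignu = R i1 inu 0 inu by gP1 P1 i1 ig inu ignu; fin R.
  have r121 : R ig inu 0 ig = 0 by gC C ig inu ig ig; fin R.
  have r122 : R ig inu 0 inu = 0 by gC C ig inu ig inu; fin R.
  have r123 : R ig inu 0 ignu = 0 by gC C ig inu ignu ig; fin R.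
  have r120 : R ig inu 0 i1 = 0 by gC C ig inu i1 i1; fin R.
  have r130 : R ig ignu 0 i1 = 0 by gP1 P1 ig ig inu i1; fin R.
  have r131 : R ig ignu 0 ig = 0 by gP1 P1 ig ig inu ig; fin R.
  have r132 : R ig ignu 0 inu = 0 by gP1 P1 ig ig inu inu; fin R.
  have r133 : R ig ignu 0 ignu = 0 by gP1 P1 ig ig inu ignu; fin R.
  have ss : R i1 inu 0 inu * R i1 inu 0 inu = R i1 inu 0 inu by gP2 P2 i1 i1 inu inu; fin R.
  have r212 : R inu ig 0 inu = 0 by gC C inu ig ig inu; fin R.
  have r211 : R inu ig 0 ig = - R inu ig 0 i1 by gC C inu ig i1 ig; fin R.
  have r213 : R inu ig 0 ignu = 0 by gP1 P1 inu ig ig ignu; fin R.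
  have r311 : R ignu ig 0 ig = - R ignu ig 0 i1 by gC C ignu ig ig i1; fin R.
  have r313 : R ignu ig 0 ignu = 0 by gC C ignu ig i1 ignu; fin R.
  have r312 : R ignu ig 0 inu = 0 by gP1 P1 ignu ig ig inu; fin R.
  have r310 : R ignu ig 0 i1 = R inu ig 0 i1 by gP2 P2 inu ig ig i1; fin R.
  have r221 : R inu inu 0 ig = 0 by gC C inu inu ig ig; fin R.
  have r222 : R inu inu 0 inu = - (R inu ig 0 i1 * R i1 inu 0 inu) by gC C inu inu ig inu; fin R.
  have r223 : R inu inu 0 ignu = 0 by gC C inu inu ignu ig; fin R.
  have r220 : R inu inu 0 i1 = 0 by gC C inu inu i1 i1; fin R.
  have r230 : R inu ignu 0 i1 = 0 by gP1 P1 inu ig inu i1; fin R.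
  have r231 : R inu ignu 0 ig = 0 by gP1 P1 inu ig inu ig; fin R.
  have r232 : R inu ignu 0 inu = 0 by gP1 P1 inu ig inu inu; fin R.
  have r233 : R inu ignu 0 ignu = - (R inu ig 0 i1 * R i1 inu 0 inu) by gP1 P1 inu ig inu ignu; fin R.
  have r320 : R ignu inu 0 i1 = 0 by gP2 P2 inu ig inu i1; fin R.
  have r321 : R ignu inu 0 ig = 0 by gP2 P2 inu ig inu ig; fin R.
  have r322 : R ignu inu 0 inu = - (R inu ig 0 i1 * R i1 inu 0 inu) by gP2 P2 inu ig inu inu; fin R.
  have r323 : R ignu inu 0 ignu = 0 by gP2 P2 inu ig inu ignu; fin R.
  have r330 : R ignu ignu 0 i1 = 0 by gP1 P1 ignu ig inu i1; fin R.
  have r331 : R ignu ignu 0 ig = 0 by gP1 P1 ignu ig inu ig; fin R.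
  have r332 : R ignu ignu 0 inu = 0 by gP1 P1 ignu ig inu inu; fin R.
  have r333 : R ignu ignu 0 ignu = - (R inu ig 0 i1 * R i1 inu 0 inu) by gP1 P1 ignu ig inu ignu; fin R.
  case: (idem ss) => s0.
  + have ra : R inu ig 0 i1 = 0 by gP2 P2 i1 inu ig i1; fin R.
    right; right; right; right; left.
    by apply: mk_ivvi; repeat split; vec R.
  + right; left; exists (R inu ig 0 i1).
    by repeat split; vec R.
- (* A = g, B = g : cases i, iii, iv *)
  have r023 : R i1 inu 0 ignu = 0 by gC C i1 inu i1 ignu; fin R.
  have r021 : R i1 inu 0 ig = - R i1 inu 0 i1 by gC C i1 inu ig i1; fin R.
  have r020' : 2 * (R i1 inu 0 i1 * R i1 inu 0 i1) = 0 by gP1 P1 i1 inu inu i1; fin R.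
  have r020 : R i1 inu 0 i1 = 0 by apply: sq0; apply: two0 two r020'.
  have r030 : R i1 ignu 0 i1 = 0 by gP1 P1 i1 ig inu i1; fin R.
  have r031 : R i1 ignu 0 ig = 0 by gP1 P1 i1 ig inu ig; fin R.
  have r032 : R i1 ignu 0 inu = 0 by gP1 P1 i1 ig inu inu; fin R.
  have r033 : R i1 ignu 0 ignu = R i1 inu 0 inu by gP1 P1 i1 ig inu ignu; fin R.
  have r123 : R ig inu 0 ignu = 0 by gC C ig inu i1 ignu; fin R.
  have r121 : R ig inu 0 ig = - R ig inu 0 i1 by gC C ig inu ig i1; fin R.
  have r120' : 2 * (R ig inu 0 i1 * R ig inu 0 i1) = 0 by gP1 P1 ig inu inu i1; fin R.
  have r120 : R ig inu 0 i1 = 0 by apply: sq0; apply: two0 two r120'.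
  have r130 : R ig ignu 0 i1 = 0 by gP1 P1 ig ig inu i1; fin R.
  have r131 : R ig ignu 0 ig = 0 by gP1 P1 ig ig inu ig; fin R.
  have r132 : R ig ignu 0 inu = 0 by gP1 P1 ig ig inu inu; fin R.
  have r133 : R ig ignu 0 ignu = R ig inu 0 inu by gP1 P1 ig ig inu ignu; fin R.
  have ss : R i1 inu 0 inu * R i1 inu 0 inu = R i1 inu 0 inu by gP2 P2 i1 i1 inu inu; fin R.
  have dd : R ig inu 0 inu * R ig inu 0 inu = R i1 inu 0 inu by gP2 P2 ig ig inu inu; fin R.
  have r210 : R inu ig 0 i1 = 0 by gC C inu ig i1 i1; fin R.
  have r211 : R inu ig 0 ig = 0 by gC C inu ig ig ig; fin R.
  have r212 : R inu ig 0 inu = 0 by gC C inu ig inu i1; fin R.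
  have r213 : R inu ig 0 ignu = 0 by gC C inu ig i1 ignu; fin R.
  have r310 : R ignu ig 0 i1 = 0 by gC C ignu ig i1 i1; fin R.
  have r311 : R ignu ig 0 ig = 0 by gC C ignu ig ig ig; fin R.
  have r312 : R ignu ig 0 inu = 0 by gC C ignu ig inu i1; fin R.
  have r313 : R ignu ig 0 ignu = 0 by gC C ignu ig i1 ignu; fin R.
  case: (idem ss) => s0.
  + have rd : R ig inu 0 inu = 0 by apply: sq0; rewrite dd s0.
    have r220 : R inu inu 0 i1 = 0 by gP2 P2 inu i1 inu i1; fin R.
    have r221 : R inu inu 0 ig = 0 by gP2 P2 inu i1 inu ig; fin R.
    have r222 : R inu inu 0 inu = 0 by gP2 P2 inu i1 inu inu; fin R.
    have r223 : R inu inu 0 ignu = 0 by gP2 P2 inu i1 inu ignu; fin R.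
    have r230 : R inu ignu 0 i1 = 0 by gP2 P2 inu i1 ignu i1; fin R.
    have r231 : R inu ignu 0 ig = 0 by gP2 P2 inu i1 ignu ig; fin R.
    have r232 : R inu ignu 0 inu = 0 by gP2 P2 inu i1 ignu inu; fin R.
    have r233 : R inu ignu 0 ignu = 0 by gP2 P2 inu i1 ignu ignu; fin R.
    have r320 : R ignu inu 0 i1 = 0 by gP2 P2 ignu i1 inu i1; fin R.
    have r321 : R ignu inu 0 ig = 0 by gP2 P2 ignu i1 inu ig; fin R.
    have r322 : R ignu inu 0 inu = 0 by gP2 P2 ignu i1 inu inu; fin R.
    have r323 : R ignu inu 0 ignu = 0 by gP2 P2 ignu i1 inu ignu; fin R.
    have r330 : R ignu ignu 0 i1 = 0 by gP2 P2 ignu i1 ignu i1; fin R.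
    have r331 : R ignu ignu 0 ig = 0 by gP2 P2 ignu i1 ignu ig; fin R.
    have r332 : R ignu ignu 0 inu = 0 by gP2 P2 ignu i1 ignu inu; fin R.
    have r333 : R ignu ignu 0 ignu = 0 by gP2 P2 ignu i1 ignu ignu; fin R.
    right; right; right; left.
    by apply: mk_ivvi; repeat split; vec R.
  + have r221 : R inu inu 0 ig = - R inu inu 0 i1 by gC C inu inu ig i1; fin R.
    have r223 : R inu inu 0 ignu = 0 by gC C inu inu i1 ignu; fin R.
    have r321 : R ignu inu 0 ig = - R ignu inu 0 i1 by gC C ignu inu ig i1; fin R.
    have r323 : R ignu inu 0 ignu = 0 by gC C ignu inu i1 ignu; fin R.
    have dd1 : R ig inu 0 inu * R ig inu 0 inu = 1 by rewrite dd s0.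
    case: (sq1 dd1) => d1.
    * have r322 : R ignu inu 0 inu = R inu inu 0 inu by gP2 P2 ig inu inu inu; fin R.
      have r220' : 2 * R inu inu 0 i1 = 0 by gP1 P1 inu inu inu inu; fin R.
      have r220 := two0 two r220'.
      have r320' : 2 * R ignu inu 0 i1 = 0 by gP1 P1 ignu inu inu inu; fin R.
      have r320 := two0 two r320'.
      have r222' : 2 * R inu inu 0 inu = 0 by gP2 P2 inu ig inu inu; fin R.
      have r222 := two0 two r222'.
      have r230 : R inu ignu 0 i1 = 0 by gP1 P1 inu ig inu i1; fin R.
      have r231 : R inu ignu 0 ig = 0 by gP1 P1 inu ig inu ig; fin R.
      have r232 : R inu ignu 0 inu = 0 by gP1 P1 inu ig inu inu; fin R.
      have r233 : R inu ignu 0 ignu = 0 by gP1 P1 inu ig inu ignu; fin R.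
      have r330 : R ignu ignu 0 i1 = 0 by gP1 P1 ignu ig inu i1; fin R.
      have r331 : R ignu ignu 0 ig = 0 by gP1 P1 ignu ig inu ig; fin R.
      have r332 : R ignu ignu 0 inu = 0 by gP1 P1 ignu ig inu inu; fin R.
      have r333 : R ignu ignu 0 ignu = 0 by gP1 P1 ignu ig inu ignu; fin R.
      right; right; left.
      by repeat split; vec R.
    * have r322 : R ignu inu 0 inu = R inu inu 0 inu by gP2 P2 ig inu inu inu; fin R.
      have r220' : 2 * R inu inu 0 i1 = 0 by gP1 P1 inu inu inu ignu; fin R.
      have r220 := two0 two r220'.
      have r320' : 2 * R ignu inu 0 i1 = 0 by gP1 P1 ignu inu inu ignu; fin R.
      have r320 := two0 two r320'.
      have r230 : R inu ignu 0 i1 = 0 by gP1 P1 inu ig inu i1; fin R.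
      have r231 : R inu ignu 0 ig = 0 by gP1 P1 inu ig inu ig; fin R.
      have r232 : R inu ignu 0 inu = 0 by gP1 P1 inu ig inu inu; fin R.
      have r233 : R inu ignu 0 ignu = R inu inu 0 inu by gP1 P1 inu ig inu ignu; fin R.
      have r330 : R ignu ignu 0 i1 = 0 by gP1 P1 ignu ig inu i1; fin R.
      have r331 : R ignu ignu 0 ig = 0 by gP1 P1 ignu ig inu ig; fin R.
      have r332 : R ignu ignu 0 inu = 0 by gP1 P1 ignu ig inu inu; fin R.
      have r333 : R ignu ignu 0 ignu = R inu inu 0 inu by gP1 P1 ignu ig inu ignu; fin R.
      left; exists (R inu inu 0 inu).
      by repeat split; vec R.
Qed.
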